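(* Let $\rho:\mathbb R\to[0,\infty)$ be strictly convex with $\rho(0)=0$. For a nonempty finite index set $T$ and real numbers $(Y_i)_{i\in T}$ let $m_T$ denote the minimizer over $\mu\in\mathbb R$ of $\sum_{i\in T}\rho(Y_i-\mu)$. Then for every nonempty finite index set $S$, every family of real numbers $(Y_i)_{i\in S}$ and every partition $S=\bigcup_{j}S_j$ into finitely many pairwise disjoint nonempty sets $S_j$, \[\min_j m_{S_j}\le m_S\le \max_j m_{S_j}.\] *)

(* Defs.v *)
From HB Require Import structures.
From mathcomp Require Import all_boot all_order all_algebra.
From mathcomp Require Import reals.
Set Implicit Arguments. Unset Strict Implicit. Unset Printing Implicit Defensive.
Import Order.TTheory GRing.Theory Num.Theory.
Local Open Scope ring_scope.

Definition strictly_convex (R : realType) (f : R -> R) : Prop :=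
  forall x y t : R, x != y -> 0 < t -> t < 1 ->
    f (t * x + (1 - t) * y) < t * f x + (1 - t) * f y.

Definition mloss (R : realType) (I : finType) (rho : R -> R) (Y : I -> R)
  (T : {set I}) (mu : R) : R := \sum_(i in T) rho (Y i - mu).

Definition is_minimizer (R : realType) (I : finType) (rho : R -> R) (Y : I -> R)
  (T : {set I}) (m : R) : Prop :=
  forall mu : R, mloss rho Y T m <= mloss rho Y T mu.

(* Main.v *)
Require Import Defs.
From HB Require Import structures.
From mathcomp Require Import all_boot all_order all_algebra.
From mathcomp Require Import reals.
From mathcomp Require Import ring lra.
Import Order.TTheory GRing.Theory Num.Theory.
Local Open Scope ring_scope.

Section Aux.
Variables (R : realType) (rho : R -> R) (rho_cvx : strictly_convex rho).
Variables (I : finType) (Y : I -> R).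

Lemma sc_loss (B : {set I}) u v t : B != set0 -> u != v -> 0 < t -> t < 1 ->
  mloss rho Y B (t * u + (1 - t) * v) < t * mloss rho Y B u + (1 - t) * mloss rho Y B v.
Proof.
move=> /set0Pn [x xB] uv t0 t1; rewrite /mloss !mulr_sumr -big_split /=.
apply: ltr_sum; first by apply/hasP; exists x; rewrite ?mem_index_enum.
move=> i _.
have -> : Y i - (t * u + (1 - t) * v) = t * (Y i - u) + (1 - t) * (Y i - v) by ring.
by apply: rho_cvx => //; rewrite (inj_eq (addrI _)) eqr_opp.
Qed.

Lemma dec_loss (B : {set I}) mB x y : B != set0 -> is_minimizer rho Y B mB ->
  y < x -> x <= mB -> mloss rho Y B x < mloss rho Y B y.
Proof.
move=> Bn hmin yx xm.
have minlt : mloss rho Y B mB < mloss rho Y B y.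
  rewrite ltNge; apply/negP => hle.
  have yne : y != mB by rewrite lt_eqF // (lt_le_trans yx xm).
  have := @sc_loss B y mB (1/2) Bn yne ltac:(lra) ltac:(lra).
  have := hmin ((1/2) * y + (1 - 1/2) * mB); lra.
case: (eqVneq x mB) => [-> //|xne].
have xlt : x < mB by rewrite lt_neqAle xne.
pose t := (mB - x) / (mB - y).
have dpos : 0 < mB - y by rewrite subr_gt0 (lt_trans yx xlt).
have t0 : 0 < t by rewrite divr_gt0 // subr_gt0.
have t1 : t < 1 by rewrite ltr_pdivrMr // mul1r; lra.
have yne : y != mB by rewrite lt_eqF // (lt_trans yx xlt).
have ex : t * y + (1 - t) * mB = x.
  rewrite /t; field; lra.
have := @sc_loss B y mB t Bn yne t0 t1; rewrite ex => h.
have : (1 - t) * mloss rho Y B mB <= (1 - t) * mloss rho Y B y.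
  by rewrite ler_pM2l ?subr_gt0 // ltW.
lra.
Qed.

Lemma half (S : {set I}) (S_nonempty : S != set0)
  (P : {set {set I}}) (P_part : partition P S)
  (m : {set I} -> R) (mS : R)
  (hmS : is_minimizer rho Y S mS)
  (hm : forall B, B \in P -> is_minimizer rho Y B (m B)) :
  exists2 B, B \in P & m B <= mS.
Proof.
case/and3P: P_part => /eqP cov triv s0.
case: (boolP [exists B in P, m B <= mS]) => [/exists_inP [B ? ?]|hn].
  by exists B.
exfalso.
have allgt : forall B, B \in P -> mS < m B.
  move=> B BP; rewrite ltNge; apply/negP => h; move/negP: hn; apply.
  by apply/exists_inP; exists B.
case/set0Pn: S_nonempty => x xS.
have B0P : pblock P x \in P by apply: pblock_mem; rewrite cov.
case: (arg_minP m B0P) => Bm BmP Bmin.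
have : mloss rho Y S (m Bm) < mloss rho Y S mS.
  rewrite /mloss -cov !big_trivIset //.
  apply: ltr_sum; first by apply/hasP; exists Bm; rewrite ?mem_index_enum.
  move=> B BP; apply: (@dec_loss B (m B)) => //.
  - by apply: contraNneq s0 => <-.
  - exact: hm.
  - exact: allgt.
  - exact: Bmin.
by rewrite ltNge hmS.
Qed.
End Aux.

Theorem lemma3p2 (R : realType) (rho : R -> R)
  (rho_ge0 : forall x, 0 <= rho x) (rho0 : rho 0 = 0)
  (rho_cvx : strictly_convex rho)
  (I : finType) (Y : I -> R) (S : {set I}) (S_nonempty : S != set0)
  (P : {set {set I}}) (P_part : partition P S)
  (m : {set I} -> R) (mS : R)
  (hmS : is_minimizer rho Y S mS)
  (hm : forall B, B \in P -> is_minimizer rho Y B (m B)) :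
  (exists2 B, B \in P & m B <= mS) /\ (exists2 B, B \in P & mS <= m B).
Proof.
split; first exact: (@half R rho rho_cvx I Y S S_nonempty P P_part m mS hmS hm).
pose rho' := fun z : R => rho (- z).
have cvx' : strictly_convex rho'.
  move=> a b t ab t0 t1; rewrite /rho'.
  have -> : - (t * a + (1 - t) * b) = t * (- a) + (1 - t) * (- b) by ring.
  by apply: rho_cvx => //; rewrite eqr_opp.
have lossE : forall T mu, mloss rho' (fun i => - Y i) T (- mu) = mloss rho Y T mu.
  by move=> T mu; rewrite /mloss /rho'; apply: eq_bigr => i _; rewrite opprB opprK addrC.
have key : forall T mu, is_minimizer rho Y T mu -> is_minimizer rho' (fun i => - Y i) T (- mu).
  move=> T mu h nu; rewrite lossE -[nu]opprK lossE; exact: h.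
have [B BP hB] := @half R rho' cvx' I (fun i => - Y i) S S_nonempty P P_part
  (fun B => - m B) (- mS) (key _ _ hmS)
  (fun B BP => key _ _ (hm B BP)).
by exists B => //; rewrite -lerN2.
Qed.
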